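(* Let $F$, $H$, $X$, $\Omega$, $Q$ and the sequences generated by the IneIREG method be as described in the context. Suppose: $(\eta_k)$ is nonincreasing; $\alpha_0\in[0,1]$ and $(\alpha_k/\eta_k)$ is nonincreasing; $\lambda_k\in[\underline\lambda,\overline\lambda]$ for all $k\ge0$ with $0<\underline\lambda\le\overline\lambda\le1/(L_F+\eta_0L_H)$; and $\sum_{k=0}^\infty\delta_k\eta_k^{-1}<+\infty$. For $k\ge1$ let $\Lambda_k=\sum_{j=0}^{k-1}\lambda_j$ and $\overline y_k=\Lambda_k^{-1}\sum_{j=0}^{k-1}\lambda_jy_j$. Then for all $k\ge1$, $$0\le\mathrm{Gap}(\overline y_k,F,X)\le\frac1k\Big(\frac{D_X^2}{2\underline\lambda}\Big)+\frac{\sum_{j=0}^{k-1}\delta_j}{k}\Big(\frac{1}{2\underline\lambda}\Big)+\frac{\sum_{j=0}^{k-1}\eta_j}{k}\Big(\frac{\overline\lambda C_HD_X}{\underline\lambda}\Big).$$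
   Context: Work in $\mathbb{R}^n$ with Euclidean inner product $\langle\cdot,\cdot\rangle$ and norm $\|\cdot\|$. The maps $F\colon \mathrm{Dom}\,F\to\mathbb{R}^n$ and $H\colon\mathrm{Dom}\,H\to\mathbb{R}^n$ are monotone and Lipschitz continuous with constants $L_F>0$ and $L_H>0$. $X$ is a nonempty compact convex set and $\Omega$ a nonempty closed convex set with $X\subset\Omega\subset\mathrm{Dom}\,F\cap\mathrm{Dom}\,H$; $P_X,P_\Omega$ denote orthogonal projections. $Q:=\{x\in X:\langle F(x),y-x\rangle\ge0\ \forall y\in X\}$ is assumed nonempty. $D_X:=\sup_{x,y\in X}\|x-y\|$, $C_H:=\sup_{x\in X}\|H(x)\|$. $\mathrm{Gap}(z,F,X):=\sup_{x\in X}\langle F(x),z-x\rangle$. IneIREG method: start with $x_0=x_{-1}\in X$; for $k=0,1,\dots$, with parameters $\alpha_k\ge0$, $\lambda_k>0$, $\eta_k>0$, set $w_k=x_k+\alpha_k(x_k-x_{k-1})$, $w'_k=P_\Omega(w_k)$, $y_k=P_X\big(w_k-\lambda_k(F(w'_k)+\eta_kH(w'_k))\big)$, $x_{k+1}=P_X\big(w_k-\lambda_k(F(y_k)+\eta_kH(y_k))\big)$. Also $\delta_k:=\alpha_k(1+\alpha_k)\|x_k-x_{k-1}\|^2$ for $k\ge0$. *)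

(* Defs.v *)
From HB Require Import structures.
From mathcomp Require Import all_boot all_order all_algebra.
From mathcomp Require Import all_classical all_reals all_analysis.
Set Implicit Arguments. Unset Strict Implicit. Unset Printing Implicit Defensive.
Import Order.TTheory GRing.Theory Num.Theory.
Import numFieldNormedType.Exports.
Local Open Scope classical_set_scope.
Local Open Scope ring_scope.

Section Defs.
Variables (R : realType) (n : nat).
Local Notation vec := 'rV[R]_n.

Definition dotp (u v : vec) : R := \sum_(i < n) u ord0 i * v ord0 i.
Definition enorm (u : vec) : R := Num.sqrt (dotp u u).

Definition convex_set_E (A : set vec) : Prop :=
  forall x y t, A x -> A y -> 0 <= t -> t <= 1 -> A (t *: x + (1 - t) *: y).

Definition monotone_op_on (D : set vec) (G : vec -> vec) : Prop :=
  forall x y, D x -> D y -> 0 <= dotp (G x - G y) (x - y).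

Definition lipschitz_op_on (D : set vec) (G : vec -> vec) (L : R) : Prop :=
  forall x y, D x -> D y -> enorm (G x - G y) <= L * enorm (x - y).

Definition is_projection (A : set vec) (P : vec -> vec) : Prop :=
  forall z, A (P z) /\ forall y, A y -> enorm (z - P z) <= enorm (z - y).

Definition VIsol (F : vec -> vec) (X : set vec) : set vec :=
  [set x | X x /\ forall y, X y -> 0 <= dotp (F x) (y - x)].

Definition Gap (z : vec) (F : vec -> vec) (X : set vec) : R :=
  sup [set r | exists2 x, X x & r = dotp (F x) (z - x)].

Definition diam (X : set vec) : R :=
  sup [set r | exists x y, [/\ X x, X y & r = enorm (x - y)]].

Definition supnorm (X : set vec) (H : vec -> vec) : R :=
  sup [set r | exists2 x, X x & r = enorm (H x)].

End Defs.

(* Main.v *)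
Require Import Defs.
From HB Require Import structures.
From mathcomp Require Import all_boot all_order all_algebra.
From mathcomp Require Import all_classical all_reals all_analysis.
From mathcomp Require Import ring lra.
Import Order.TTheory GRing.Theory Num.Theory.
Import numFieldNormedType.Exports.
Local Open Scope classical_set_scope.
Local Open Scope ring_scope.
Section Aux.
Set Implicit Arguments. Unset Strict Implicit.
Variables (R : realType) (n : nat).
Local Notation vec := 'rV[R]_n.
Implicit Types u v w : vec.

Local Notation nsq u := (dotp u u).

Lemma dotpDl u v w : dotp (u + v) w = dotp u w + dotp v w.
Proof. by rewrite /dotp -big_split; apply: eq_bigr => i _; rewrite mxE mulrDl. Qed.
Lemma dotpZl a u v : dotp (a *: u) v = a * dotp u v.
Proof. by rewrite /dotp mulr_sumr; apply: eq_bigr => i _; rewrite mxE mulrA. Qed.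
Lemma dotpNl u v : dotp (- u) v = - dotp u v.
Proof. by rewrite /dotp -sumrN; apply: eq_bigr => i _; rewrite mxE mulNr. Qed.
Lemma dotpC u v : dotp u v = dotp v u.
Proof. by rewrite /dotp; apply: eq_bigr => i _; rewrite mulrC. Qed.
Lemma dotpBl u v w : dotp (u - v) w = dotp u w - dotp v w.
Proof. by rewrite dotpDl dotpNl. Qed.
Lemma dotpDr u v w : dotp w (u + v) = dotp w u + dotp w v.
Proof. by rewrite dotpC dotpDl !(dotpC w). Qed.
Lemma dotpBr u v w : dotp w (u - v) = dotp w u - dotp w v.
Proof. by rewrite dotpC dotpBl !(dotpC w). Qed.
Lemma dotpZr a u v : dotp v (a *: u) = a * dotp v u.
Proof. by rewrite dotpC dotpZl dotpC. Qed.
Lemma dotpNr u v : dotp v (- u) = - dotp v u.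
Proof. by rewrite dotpC dotpNl dotpC. Qed.
Lemma dotp0r u : dotp u 0 = 0.
Proof. by rewrite /dotp big1 // => i _; rewrite mxE mulr0. Qed.
Lemma dotp_ge0 u : 0 <= nsq u.
Proof. by rewrite /dotp sumr_ge0 // => i _; rewrite -expr2 sqr_ge0. Qed.
Lemma nsqD u v : nsq (u + v) = nsq u + 2 * dotp u v + nsq v.
Proof. rewrite !dotpDl !dotpDr (dotpC v u); ring. Qed.
Lemma nsqB u v : nsq (u - v) = nsq u - 2 * dotp u v + nsq v.
Proof. rewrite !dotpBl !dotpBr (dotpC v u); ring. Qed.
Lemma enorm_sq u : enorm u ^+ 2 = nsq u.
Proof. by rewrite /enorm sqr_sqrtr // dotp_ge0. Qed.
Lemma enorm_ge0 u : 0 <= enorm u.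
Proof. exact: sqrtr_ge0. Qed.
Lemma dotp_sumr (k : nat) (f : nat -> vec) u :
  dotp u (\sum_(j < k) f j) = \sum_(j < k) dotp u (f j).
Proof.
elim: k => [|k IH]; first by rewrite !big_ord0 dotp0r.
by rewrite !big_ord_recr /= dotpDr IH.
Qed.

Lemma nsq0_dotp u v : nsq v = 0 -> dotp u v = 0.
Proof.
move=> h; have h0 := psumr_eq0P (fun i _ => sqr_ge0 (v ord0 i)).
rewrite /dotp big1 // => i _.
have hs : \sum_(j < n) v ord0 j ^+ 2 = 0.
  by rewrite -[RHS]h /dotp; apply: eq_bigr => j _; rewrite expr2.
have := h0 xpredT hs i isT.
by move/eqP; rewrite sqrf_eq0 => /eqP ->; rewrite mulr0.
Qed.

Lemma cauchy_schwarz u v : dotp u v <= enorm u * enorm v.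
Proof.
have [v0|vpos] := eqVneq (nsq v) 0.
  by rewrite nsq0_dotp // mulr_ge0 // enorm_ge0.
have vp : 0 < nsq v by rewrite lt0r vpos dotp_ge0.
have h := dotp_ge0 (nsq v *: u - dotp u v *: v).
rewrite nsqB !dotpZl !dotpZr in h.
have h2 : dotp u v ^+ 2 <= nsq u * nsq v.
  have : 0 <= nsq v * (nsq u * nsq v - dotp u v ^+ 2) by nra.
  by rewrite pmulr_rge0 // subr_ge0.
apply: le_trans (ler_norm _) _.
rewrite -sqrtr_sqr /enorm -sqrtrM ?dotp_ge0 //.
by apply: ler_wsqrtr.
Qed.

Lemma enorm_triangle u v : enorm (u + v) <= enorm u + enorm v.
Proof.
rewrite -(ler_pXn2r (_ : 0 < 2)%N) ?nnegrE ?addr_ge0 ?enorm_ge0 //.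
rewrite enorm_sq nsqD -!enorm_sq; have := cauchy_schwarz u v; nra.
Qed.

Lemma proj_vi (A : set vec) P z yy : convex_set_E A -> is_projection A P -> A yy ->
  dotp (z - P z) (yy - P z) <= 0.
Proof.
move=> cvx prj Ay; have [AP Pmin] := prj z.
set p := P z; set e := z - p; set d := yy - p.
rewrite leNgt; apply/negP => cpos.
set c := dotp e d in cpos.
have dge := dotp_ge0 d.
set t := c / (c + nsq d).
have tpos : 0 < t by rewrite divr_gt0 // ltr_wpDr.
have tle1 : t <= 1 by rewrite ler_pdivrMr ?mul1r ?ltr_wpDr // lerDl.
have At := cvx yy p t Ay AP (ltW tpos) tle1.
have := Pmin _ At.
have -> : z - (t *: yy + (1 - t) *: p) = e - t *: d.
  by rewrite /e /d scalerBr scalerBl scale1r; apply/rowP => i; rewrite !mxE; ring.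
rewrite -(ler_pXn2r (_ : 0 < 2)%N) ?nnegrE ?enorm_ge0 // !enorm_sq.
rewrite (_ : z - P z = e) // [X in _ <= X]nsqB !dotpZr !dotpZl -/c => h.
have h1 : 2 * c <= t * nsq d by nra.
have ht : t * (c + nsq d) = c by rewrite /t mulfVK // gt_eqF // ltr_wpDr.
nra.
Qed.

End Aux.
Section Bnd.
Set Implicit Arguments. Unset Strict Implicit.
Variables (R : realType) (n : nat).
Local Notation vec := 'rV[R]_n.
Implicit Types u v w : vec.

Lemma enormN u : enorm (- u) = enorm u.
Proof. by rewrite /enorm dotpNl dotpNr opprK. Qed.

Lemma enorm_le_mx u : enorm u <= 1 + n%:R * `|u| ^+ 2.
Proof.
have hi : forall i, `|u ord0 i| <= `|u|.
  move=> i; rewrite [X in _ <= X]mx_normrE.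
  exact: (le_bigmax _ (fun ij : 'I_1 * 'I_n => `|u ij.1 ij.2|) (ord0, i)).
have hd : dotp u u <= n%:R * `|u| ^+ 2.
  have : \sum_(i < n) u ord0 i * u ord0 i <= \sum_(i < n) `|u| ^+ 2.
    apply: ler_sum => i _; rewrite -expr2 -real_normK ?num_real //.
    by rewrite lerXn2r ?nnegrE.
  by rewrite sumr_const card_ord mulr_natl.
have a0 := dotp_ge0 u.
apply: le_trans (_ : Num.sqrt ((1 + dotp u u) ^+ 2) <= _).
  by apply: ler_wsqrtr; nra.
by rewrite sqrtr_sqr ger0_norm ?lerD2l // addr_ge0.
Qed.

Lemma compact_enorm (X : set vec) : compact X -> exists M, forall u, X u -> enorm u <= M.
Proof.
move=> /compact_bounded [M0 [_ MA]].
exists (1 + n%:R * (`|M0| + 1) ^+ 2) => u Xu.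
apply: le_trans (enorm_le_mx u) _; rewrite lerD2l ler_wpM2l //.
have := MA (`|M0| + 1) _ u Xu.
have h : M0 < `|M0| + 1 by apply: le_lt_trans (ler_norm M0) _; rewrite ltrDl.
by move=> /(_ h) hu; rewrite lerXn2r ?nnegrE // ?addr_ge0.
Qed.

Lemma diam_ub (X : set vec) a b : compact X -> X a -> X b -> enorm (a - b) <= diam X.
Proof.
move=> /compact_enorm [M hM] Xa Xb.
apply: sup_upper_bound; last by exists a, b.
split; first by exists (enorm (a - b)), a, b.
exists (M + M) => r [p [q [Xp Xq ->]]].
apply: le_trans (enorm_triangle _ _) _.
by rewrite enormN lerD // hM.
Qed.

Lemma supnorm_ub (X D : set vec) (G : vec -> vec) L a :
  compact X -> lipschitz_op_on D G L -> X `<=` D -> X a -> enorm (G a) <= supnorm X G.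
Proof.
move=> /compact_enorm [M hM] lip XD Xa.
apply: sup_upper_bound; last by exists a.
split; first by exists (enorm (G a)), a.
exists (enorm (G a) + `|L| * (M + M)) => r [p Xp ->].
have -> : G p = (G p - G a) + G a by rewrite subrK.
apply: le_trans (enorm_triangle _ _) _; rewrite addrC lerD2l.
apply: le_trans (lip _ _ (XD _ Xp) (XD _ Xa)) _.
apply: le_trans (_ : `|L| * enorm (p - a) <= _).
  by rewrite ler_wpM2r ?enorm_ge0 // ler_norm.
rewrite ler_wpM2l //; apply: le_trans (enorm_triangle _ _) _.
by rewrite enormN lerD // hM.
Qed.

End Bnd.
Section Step.
Set Implicit Arguments. Unset Strict Implicit.
Variables (R : realType) (n : nat).
Local Notation vec := 'rV[R]_n.
Local Notation nsq u := (dotp u u).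

Lemma eg_step (w w' yk x1 x g1 g2 : vec) (lam L : R) :
  dotp (w - lam *: g2 - x1) (x - x1) <= 0 ->
  dotp (w - lam *: g1 - yk) (x1 - yk) <= 0 ->
  dotp (w - w') (yk - w') <= 0 ->
  nsq (g2 - g1) <= L ^+ 2 * nsq (yk - w') ->
  0 <= lam -> 0 <= L -> lam * L <= 1 ->
  nsq (x1 - x) <= nsq (w - x) + 2 * lam * dotp g2 (x - yk).
Proof.
move=> h1 h2 h3 h4 l0 L0 lL.
set c := w - yk; set d := yk - x1; set e := x - yk; set q := yk - w'.
have E1 : w - lam *: g2 - x1 = c + d - lam *: g2 by apply/rowP => i; rewrite !mxE; ring.
have E2 : x - x1 = e + d by apply/rowP => i; rewrite !mxE; ring.
have E3 : w - lam *: g1 - yk = c - lam *: g1 by apply/rowP => i; rewrite !mxE; ring.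
have E4 : x1 - yk = - d by apply/rowP => i; rewrite !mxE; ring.
have E5 : w - w' = c + q by apply/rowP => i; rewrite !mxE; ring.
have E6 : x1 - x = - (d + e) by apply/rowP => i; rewrite !mxE; ring.
have E7 : w - x = c - e by apply/rowP => i; rewrite !mxE; ring.
rewrite E1 E2 in h1; rewrite E3 E4 in h2; rewrite E5 -/q in h3; rewrite -/q in h4.
rewrite E6 E7 -/e.
have F1 : lam ^+ 2 * nsq (g2 - g1) <= nsq q.
  apply: le_trans (_ : lam ^+ 2 * (L ^+ 2 * nsq q) <= _).
    by rewrite ler_wpM2l // exprn_ge0.
  rewrite mulrA -exprMn ler_piMl ?dotp_ge0 //.
  by rewrite expr_le1 // mulr_ge0.
have F2 := dotp_ge0 (lam *: (g2 - g1) - d).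
have F4 : nsq q <= nsq c.
  have -> : c = (c + q) - q by rewrite addrK.
  rewrite nsqB; have := dotp_ge0 (c + q).
  rewrite (dotpC (c + q) q) in h3 *; lra.
move: F1 F2 F4 h1 h2 h3.
clearbody c d e q.
set G := nsq (g2 - g1).
rewrite !(dotpDl, dotpDr, dotpBl, dotpBr, dotpNl, dotpNr, dotpZl, dotpZr).
rewrite ?(dotpC d c) ?(dotpC e c) ?(dotpC g1 c) ?(dotpC g2 c) ?(dotpC q c)
        ?(dotpC e d) ?(dotpC g1 d) ?(dotpC g2 d) ?(dotpC q d)
        ?(dotpC g1 e) ?(dotpC g2 e) ?(dotpC q e).
rewrite /G !(dotpDl, dotpDr, dotpBl, dotpBr, dotpNl, dotpNr, dotpZl, dotpZr) ?(dotpC g2 g1).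
move=> *; nra.
Qed.

End Step.
Section Tele.
Variable (R : realType).

Lemma tele_strong (phi a : nat -> R) D2 m : (forall j, 0 <= phi j <= D2) ->
  (forall j, 0 <= a j) -> (forall j, a j.+1 <= a j) -> a 0%N <= 1 ->
  \sum_(j < m.+1) (phi j - phi j.+1 + a j * (phi j - phi j.-1))
    + phi m.+1 - a m * phi m <= (1 - a m) * D2.
Proof.
move=> hp ha hm a01; elim: m => [|m IH].
  rewrite big_ord_recr big_ord0 /=.
  have := hp 0%N; have := ha 0%N; move=> *; nra.
rewrite big_ord_recr /=.
have := hp m; have := hm m; have := ha m.+1; move: IH; move=> *; nra.
Qed.

Lemma tele (phi a : nat -> R) D2 m : (forall j, 0 <= phi j <= D2) ->
  (forall j, 0 <= a j) -> (forall j, a j.+1 <= a j) -> a 0%N <= 1 ->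
  \sum_(j < m.+1) (phi j - phi j.+1 + a j * (phi j - phi j.-1)) <= D2.
Proof.
move=> hp ha hm a01; have := tele_strong m hp ha hm a01.
have := hp m; have := hp m.+1; have := ha m; move=> *; nra.
Qed.

End Tele.
Lemma enormZ (R : realType) (n : nat) (a : R) (u : 'rV[R]_n) : enorm (a *: u) = `|a| * enorm u.
Proof.
by rewrite /enorm dotpZl dotpZr mulrA -expr2 sqrtrM ?sqr_ge0 // sqrtr_sqr.
Qed.

Theorem proposition3p5 (R : realType) (n : nat)
  (F H : 'rV[R]_n -> 'rV[R]_n) (DomF DomH X Omega : set 'rV[R]_n)
  (LF LH : R) (PX POm : 'rV[R]_n -> 'rV[R]_n)
  (alpha lambda eta : nat -> R) (lam_lo lam_hi : R)
  (x y : nat -> 'rV[R]_n) :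
  monotone_op_on DomF F -> monotone_op_on DomH H ->
  0 < LF -> 0 < LH -> lipschitz_op_on DomF F LF -> lipschitz_op_on DomH H LH ->
  X !=set0 -> compact X -> convex_set_E X ->
  Omega !=set0 -> closed Omega -> convex_set_E Omega ->
  X `<=` Omega -> Omega `<=` DomF `&` DomH ->
  is_projection X PX -> is_projection Omega POm ->
  VIsol F X !=set0 ->
  (forall k, 0 <= alpha k) -> (forall k, 0 < lambda k) -> (forall k, 0 < eta k) ->
  (* IneIREG iterates, with x_{-1} = x_0 encoded as x (0.-1) = x 0 *)
  X (x 0%N) ->
  (forall k : nat,
     let w := x k + alpha k *: (x k - x k.-1) in
     let w' := POm w in
     y k = PX (w - lambda k *: (F w' + eta k *: H w')) /\
     x k.+1 = PX (w - lambda k *: (F (y k) + eta k *: H (y k)))) ->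
  (* hypotheses of the proposition *)
  (forall k, eta k.+1 <= eta k) ->
  0 <= alpha 0%N <= 1 ->
  (forall k, alpha k.+1 / eta k.+1 <= alpha k / eta k) ->
  (forall k, lam_lo <= lambda k <= lam_hi) ->
  0 < lam_lo -> lam_lo <= lam_hi -> lam_hi <= 1 / (LF + eta 0%N * LH) ->
  (let delta k := alpha k * (1 + alpha k) * enorm (x k - x k.-1) ^+ 2 in
   cvgn (series (fun k => delta k / eta k))) ->
  forall k : nat, (1 <= k)%N ->
    let delta j := alpha j * (1 + alpha j) * enorm (x j - x j.-1) ^+ 2 in
    let Lam := \sum_(j < k) lambda j in
    let ybar := Lam^-1 *: \sum_(j < k) lambda j *: y j in
    0 <= Gap ybar F X /\
    Gap ybar F X <=
      k%:R^-1 * (diam X ^+ 2 / (2 * lam_lo))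
      + (\sum_(j < k) delta j) / k%:R * (1 / (2 * lam_lo))
      + (\sum_(j < k) eta j) / k%:R * (lam_hi * supnorm X H * diam X / lam_lo).
Proof.
move=> monF monH LF0 LH0 lipF lipH Xne Xcpt Xcvx Omne Omcl Omcvx XOm OmD prjX prjOm
  VIne alpha0 lam0 eta0 X0 hit etadec /andP[_ a01] aeta lamb lo0 lolehi hile _ k k1.
move=> delta Lam ybar.
have xX : forall j, X (x j).
  by case=> [//|j]; rewrite (hit j).2; exact: (prjX _).1.
have yX : forall j, X (y j) by move=> j; rewrite (hit j).1; exact: (prjX _).1.
set D := diam X; set C := supnorm X H.
have Dub : forall a b, X a -> X b -> enorm (a - b) <= D.
  by move=> a b Xa Xb; exact: diam_ub.
have Cub : forall a, X a -> enorm (H a) <= C.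
  move=> a Xa; apply: (@supnorm_ub _ _ X DomH H LH) => // z Xz.
  by have [] := OmD _ (XOm _ Xz).
have D0 : 0 <= D by apply: le_trans (Dub _ _ (X0) (X0)); exact: enorm_ge0.
have C0 : 0 <= C by apply: le_trans (Cub _ X0); exact: enorm_ge0.
have adec : forall j, alpha j.+1 <= alpha j.
  move=> j; have := aeta j; rewrite ler_pdivrMr // => h.
  apply: le_trans h _.
  apply: le_trans (_ : alpha j / eta j * eta j <= _).
    by apply: ler_wpM2l; [apply: divr_ge0 => //; exact: ltW | exact: etadec].
  by rewrite divfK // gt_eqF.
have eta_le0 : forall j, eta j <= eta 0%N.
  by elim=> [//|j IH]; exact: le_trans (etadec j) IH.
have key : forall xx j, X xx ->
  2 * lambda j * dotp (F xx) (y j - xx) <=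
  dotp (x j + alpha j *: (x j - x j.-1) - xx) (x j + alpha j *: (x j - x j.-1) - xx)
  - dotp (x j.+1 - xx) (x j.+1 - xx) + 2 * lambda j * eta j * (C * D).
  move=> xx j Xxx.
  have [ey ex] := hit j.
  set w := x j + alpha j *: (x j - x j.-1) in ey ex *.
  set w' := POm w in ey.
  set G := fun z => F z + eta j *: H z.
  have Omw' : Omega w' by exact: (prjOm w).1.
  have Omy : Omega (y j) := XOm _ (yX j).
  have h1 := @proj_vi _ _ X PX (w - lambda j *: G (y j)) xx Xcvx prjX Xxx.
  rewrite -ex in h1.
  have h2 := @proj_vi _ _ X PX (w - lambda j *: G w') (x j.+1) Xcvx prjX (xX _).
  rewrite -ey in h2.
  have h3 := @proj_vi _ _ Omega POm w (y j) Omcvx prjOm Omy.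
  rewrite -/w' in h3.
  set L := LF + eta j * LH.
  have h4 : dotp (G (y j) - G w') (G (y j) - G w') <= L ^+ 2 * dotp (y j - w') (y j - w').
    have [DFy DHy] := OmD _ Omy; have [DFw DHw] := OmD _ Omw'.
    have -> : G (y j) - G w' = (F (y j) - F w') + eta j *: (H (y j) - H w').
      by rewrite /G; apply/rowP => i; rewrite !mxE; ring.
    have Lp : 0 <= L by rewrite /L addr_ge0 ?mulr_ge0 ?ltW.
    rewrite -!enorm_sq -exprMn; apply: lerXn2r; rewrite ?nnegrE ?mulr_ge0 ?enorm_ge0 //.
    apply: le_trans (enorm_triangle _ _) _.
    rewrite enormZ gtr0_norm // /L mulrDl.
    apply: lerD; first exact: lipF.
    rewrite -mulrA; apply: ler_wpM2l; [exact: ltW | exact: lipH].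
  have lL : lambda j * L <= 1.
    have hL : L <= LF + eta 0%N * LH.
      rewrite /L lerD2l; apply: ler_wpM2r; [exact: ltW | exact: eta_le0].
    have Lp : 0 < LF + eta 0%N * LH by rewrite ltr_wpDr ?mulr_ge0 ?ltW.
    have := lamb j; case/andP=> _ lh.
    have lh' : lambda j <= 1 / (LF + eta 0%N * LH) := le_trans lh hile.
    rewrite ler_pdivlMr // in lh'.
    apply: le_trans (_ : lambda j * (LF + eta 0%N * LH) <= _) => //.
    by apply: ler_wpM2l => //; exact: ltW.
  have st := eg_step h1 h2 h3 h4 (ltW (lam0 j))
     (addr_ge0 (ltW LF0) (mulr_ge0 (ltW (eta0 j)) (ltW LH0))) lL.
  have [DFy DHy] := OmD _ Omy; have [DFx DHx] := OmD _ (XOm _ Xxx).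
  have mF := monF _ _ DFx DFy.
  have mH : dotp (H (y j)) (xx - y j) <= C * D.
    apply: le_trans (cauchy_schwarz _ _) _.
    by apply: ler_pM; rewrite ?enorm_ge0 ?Cub ?Dub.
  move: st; rewrite /G /= (dotpDl (F (y j))) dotpZl => st.
  rewrite dotpBl in mF.
  have e1 : dotp (F xx) (xx - y j) = - dotp (F xx) (y j - xx).
    by rewrite -dotpNr opprB.
  rewrite e1 in mF.
  have l0 := lam0 j; have e0 := eta0 j.
  have m1 : lambda j * dotp (F (y j)) (xx - y j) <= lambda j * (- dotp (F xx) (y j - xx)).
    by apply: ler_wpM2l; [exact: ltW | lra].
  have m2 : lambda j * eta j * dotp (H (y j)) (xx - y j) <= lambda j * eta j * (C * D).
    by apply: ler_wpM2l => //; rewrite mulr_ge0 // ltW.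
  lra.
have wid : forall xx j,
  dotp (x j + alpha j *: (x j - x j.-1) - xx) (x j + alpha j *: (x j - x j.-1) - xx)
  = dotp (x j - xx) (x j - xx) + alpha j * (dotp (x j - xx) (x j - xx)
      - dotp (x j.-1 - xx) (x j.-1 - xx)) + delta j.
  move=> xx j; rewrite /delta enorm_sq.
  set u := x j - xx; set v := x j.-1 - xx.
  have -> : x j + alpha j *: (x j - x j.-1) - xx = u + alpha j *: (u - v).
    by apply/rowP => i; rewrite !mxE; ring.
  have -> : x j - x j.-1 = u - v by apply/rowP => i; rewrite !mxE; ring.
  clearbody u v.
  rewrite !(dotpDl, dotpDr, dotpBl, dotpBr, dotpZl, dotpZr, dotpNl, dotpNr) ?(dotpC v u); ring.
have Sd0 : 0 <= \sum_(j < k) delta j.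
  apply: sumr_ge0 => j _; rewrite /delta mulr_ge0 ?exprn_ge0 ?enorm_ge0 //.
  by rewrite mulr_ge0 ?addr_ge0.
have Se0 : 0 <= \sum_(j < k) eta j by apply: sumr_ge0 => j _; exact: ltW.
have sumineq : forall xx, X xx ->
  2 * \sum_(j < k) lambda j * dotp (F xx) (y j - xx) <=
  D ^+ 2 + \sum_(j < k) delta j + 2 * (C * D) * (lam_hi * \sum_(j < k) eta j).
  move=> xx Xxx.
  have h : \sum_(j < k) 2 * (lambda j * dotp (F xx) (y j - xx)) <=
     \sum_(j < k) ((dotp (x j - xx) (x j - xx) - dotp (x j.+1 - xx) (x j.+1 - xx)
        + alpha j * (dotp (x j - xx) (x j - xx) - dotp (x j.-1 - xx) (x j.-1 - xx)))
        + delta j + 2 * (C * D) * (lambda j * eta j)).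
    apply: ler_sum => j _; have := key xx j Xxx; rewrite wid; lra.
  rewrite -mulr_sumr !big_split /= -mulr_sumr in h.
  have ht : \sum_(j < k) ((dotp (x j - xx) (x j - xx) - dotp (x j.+1 - xx) (x j.+1 - xx)
        + alpha j * (dotp (x j - xx) (x j - xx) - dotp (x j.-1 - xx) (x j.-1 - xx))))
        <= D ^+ 2.
    have [m ->] : exists m, k = m.+1 by case: (k) k1 => [//|m] _; exists m.
    apply: (tele (phi := fun j => dotp (x j - xx) (x j - xx))) => //.
    move=> j; rewrite dotp_ge0 /= -enorm_sq; apply: lerXn2r; rewrite ?nnegrE ?enorm_ge0 //.
    exact: Dub.
  have hl : \sum_(j < k) lambda j * eta j <= lam_hi * \sum_(j < k) eta j.
    rewrite mulr_sumr; apply: ler_sum => j _; apply: ler_wpM2r; first exact: ltW.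
    by case/andP: (lamb j).
  have hCD : 0 <= C * D by rewrite mulr_ge0.
  have : 2 * (C * D) * \sum_(j < k) lambda j * eta j <= 2 * (C * D) * (lam_hi * \sum_(j < k) eta j).
    by apply: ler_wpM2l => //; rewrite mulr_ge0.
  rewrite !big_split /= in ht.
  lra.
have kpos : 0 < (k%:R : R) by rewrite ltr0n.
have Lamlo : k%:R * lam_lo <= Lam.
  have : \sum_(j < k) lam_lo <= Lam.
    by apply: ler_sum => j _; case/andP: (lamb j).
  by rewrite sumr_const card_ord mulr_natl.
have Lampos : 0 < Lam by apply: lt_le_trans Lamlo; rewrite mulr_gt0.
have Lamid : forall xx, Lam * dotp (F xx) (ybar - xx) = \sum_(j < k) lambda j * dotp (F xx) (y j - xx).
  move=> xx.
  have -> : \sum_(j < k) lambda j * dotp (F xx) (y j - xx) =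
            \sum_(j < k) lambda j * dotp (F xx) (y j) - Lam * dotp (F xx) xx.
    rewrite /Lam mulr_suml -sumrB; apply: eq_bigr => j _; rewrite dotpBr mulrBr //.
  rewrite /ybar dotpBr dotpZr (dotp_sumr k (fun j => lambda j *: y j)) mulrBr mulrA mulfV ?mul1r; last first.
    by rewrite gt_eqF.
  congr (_ - _); apply: eq_bigr => j _; exact: dotpZr.
set B := (X in _ /\ _ <= X).
have hB : B * (k%:R * lam_lo) = (D ^+ 2 + \sum_(j < k) delta j) / 2
     + C * D * (lam_hi * \sum_(j < k) eta j).
  rewrite /B; field; rewrite ?pnatr_eq0 -?lt0n ?gt_eqF //.
have B0 : 0 <= B.
  have lo0' : 0 <= 2 * lam_lo by rewrite mulr_ge0 // ltW.
  have hi0 : 0 <= lam_hi := le_trans (ltW lo0) lolehi.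
  rewrite /B !addr_ge0 //; apply: mulr_ge0.
  - by rewrite invr_ge0 ler0n.
  - by rewrite divr_ge0 // exprn_ge0.
  - by rewrite divr_ge0 // ler0n.
  - by rewrite divr_ge0.
  - by rewrite divr_ge0 // ler0n.
  - by rewrite divr_ge0 ?mulr_ge0 // ltW.
have ub : forall xx, X xx -> dotp (F xx) (ybar - xx) <= B.
  move=> xx Xxx; have := sumineq xx Xxx; rewrite -Lamid => h.
  set g := dotp (F xx) (ybar - xx) in h *.
  rewrite leNgt; apply/negP => gB.
  have g0 : 0 < g := le_lt_trans B0 gB.
  have := ler_wpM2r (ltW g0) Lamlo.
  have : k%:R * lam_lo * B < k%:R * lam_lo * g by rewrite ltr_pM2l ?mulr_gt0.
  have hCD : 0 <= C * D by rewrite mulr_ge0.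
  nra.
have hs : has_sup [set r | exists2 xx, X xx & r = dotp (F xx) (ybar - xx)].
  split; first by exists (dotp (F (x 0%N)) (ybar - x 0%N)), (x 0%N).
  by exists B => r [xx Xxx ->]; exact: ub.
split.
  have [xs [Xxs hxs]] := VIne.
  apply: le_trans (_ : dotp (F xs) (ybar - xs) <= _); last first.
    by apply: sup_upper_bound => //; exists xs.
  rewrite -(pmulr_rge0 _ Lampos) Lamid; apply: sumr_ge0 => j _.
  by rewrite mulr_ge0 ?hxs ?ltW.
apply: ge_sup; first by exists (dotp (F (x 0%N)) (ybar - x 0%N)), (x 0%N).
by move=> r [xx Xxx ->]; exact: ub.
Qed.
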